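(* For every $\epsilon>0$ there is $k_0$ such that for every $k\geqslant k_0$ with $k-1$ a prime power the following holds. Let $G$ be the incidence graph of a projective plane of order $k-1$, let $e_0=v_0v_1$ be an edge of $G$, and let $\hat G$ be obtained from two disjoint copies $G^{(1)},G^{(2)}$ of $G$ by deleting the two copies of $e_0$ and adding the edges $v_0^{(1)}v_1^{(2)}$ and $v_0^{(2)}v_1^{(1)}$. Then $\sqrt{k-1}-1-\frac{1}{2\sqrt{k-1}}<R(\hat G)<\sqrt{k-1}-1-\frac{1}{(2+\epsilon)\sqrt{k-1}}$.
   Context: For a graph $H$ of order $n$ with adjacency eigenvalues $\lambda_1\geqslant\cdots\geqslant\lambda_n$, the HL-index is $R(H)=\max\{|\lambda_{\lfloor (n+1)/2\rfloor}|,\ |\lambda_{\lceil (n+1)/2\rceil}|\}$. The incidence graph of a projective plane is the bipartite graph whose two parts are the points and the lines, a point being adjacent to a line iff it lies on it. *)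

(* Defs.v *)
From HB Require Import structures.
From mathcomp Require Import all_boot all_order all_algebra all_field.
Set Implicit Arguments. Unset Strict Implicit. Unset Printing Implicit Defensive.
Import Order.TTheory GRing.Theory Num.Theory.
Local Open Scope ring_scope.

(* A simple graph on a finite vertex type T is given by a symmetric,
   irreflexive boolean relation (these properties are proved for the
   concrete graphs below, they are not needed for the definitions). *)

Definition adjmx (T : finType) (e : rel T) : 'M[algC]_#|T| :=
  \matrix_(i, j) (e (enum_val i) (enum_val j))%:R.

(* The eigenvalues (roots of the characteristic polynomial, with
   multiplicity), listed in nonincreasing order: lambda_1 >= ... >= lambda_n.
   For a symmetric real matrix they are all real, so this order is total. *)
Definition eigvals (n : nat) (A : 'M[algC]_n) : seq algC :=
  sort (fun x y => y <= x) (sval (closed_field_poly_normal (char_poly A))).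

(* lambda_i, 1-based. *)
Definition eigval (n : nat) (A : 'M[algC]_n) (i : nat) : algC :=
  nth 0 (eigvals A) i.-1.

Definition HL_index (T : finType) (e : rel T) : algC :=
  let n := #|T| in
  Num.max `|eigval (adjmx e) (n.+1)./2| `|eigval (adjmx e) (n.+2)./2|.

Definition projective_plane (P L : finType) (inc : P -> L -> bool) (q : nat) :
  Prop :=
  [/\ (2 <= q)%N,
      (forall l : L, #|[set p | inc p l]| = q.+1),
      (forall p : P, #|[set l | inc p l]| = q.+1),
      (forall p1 p2 : P, p1 != p2 -> exists! l : L, inc p1 l && inc p2 l)
    & (forall l1 l2 : L, l1 != l2 -> exists! p : P, inc p l1 && inc p l2)].

Definition incidence_graph (P L : finType) (inc : P -> L -> bool) :
  rel (P + L)%type :=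
  fun x y => match x, y with
             | inl p, inr l => inc p l
             | inr l, inl p => inc p l
             | _, _ => false
             end.

Definition double_switch (T : finType) (e : rel T) (v0 v1 : T) :
  rel (bool * T)%type :=
  fun x y =>
    let: (b, u) := x in let: (c, w) := y in
    if b == c then
      e u w && ~~ (((u == v0) && (w == v1)) || ((u == v1) && (w == v0)))
    else ((u == v0) && (w == v1)) || ((u == v1) && (w == v0)).

Definition prime_power (m : nat) : Prop :=
  exists p e : nat, [/\ prime p, (0 < e)%N & m = (p ^ e)%N].

(* Main.v *)
Require Import Defs.
From HB Require Import structures.
From mathcomp Require Import all_boot all_order all_algebra all_field.
From mathcomp Require Import ring lra.
Import Order.TTheory GRing.Theory Num.Theory.
Set Implicit Arguments. Unset Strict Implicit. Unset Printing Implicit Defensive.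
Local Open Scope ring_scope.
Definition fc (R : ringType) (q x : R) := x^+3 - (q-1)*x^+2 - 3*q*x + q*(q-1).
Definition Qc (R : ringType) (q x : R) := x^+3 + (q-1)*x^+2 - 3*q*x - q*(q-1).

Lemma fc_decr (R : realFieldType) (s x y : R) : 2 <= s^+2 -> 0 < s ->
  0 <= x -> x < y -> y <= s -> fc (s^+2) y < fc (s^+2) x.
Proof.
move=> hq hs hx hxy hy; rewrite /fc.
have h1 : x^+2 + x*y + y^+2 <= 3 * s^+2 by nra.
have h2 : 0 < (s^+2 - 1) * (x + y) by nra.
have -> : x ^+ 3 - (s ^+ 2 - 1) * x ^+ 2 - 3 * s ^+ 2 * x + s ^+ 2 * (s ^+ 2 - 1)
  = (y ^+ 3 - (s ^+ 2 - 1) * y ^+ 2 - 3 * s ^+ 2 * y + s ^+ 2 * (s ^+ 2 - 1))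
   + (y - x) * (3 * s^+2 - (x^+2 + x*y + y^+2) + (s^+2 - 1) * (x + y)) by ring.
rewrite ltrDl; apply: mulr_gt0; lra.
Qed.

Lemma Qc_neg (R : realFieldType) (s x : R) : 2 <= s^+2 -> 0 < s ->
  0 < x -> x <= s -> Qc (s^+2) x < 0.
Proof.
move=> hq hs hx hxs; rewrite /Qc.
have h1 : x^+2 <= s^+2 by nra.
have h2 : x * (x^+2 - 3 * s^+2) < 0 by nra.
have h3 : (s^+2 - 1) * (x^+2 - s^+2) <= 0 by nra.
have -> : x ^+ 3 + (s ^+ 2 - 1) * x ^+ 2 - 3 * s ^+ 2 * x - s ^+ 2 * (s ^+ 2 - 1)
  = x * (x^+2 - 3 * s^+2) + (s^+2 - 1) * (x^+2 - s^+2) by ring.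
lra.
Qed.

Lemma fL_pos (R : realFieldType) (s : R) : 2 <= s ->
  0 < fc (s^+2) (s - 1 - 1/(2*s)).
Proof.
move=> hs; have s0 : s != 0 by apply/negP => /eqP s0; rewrite s0 in hs; lra.
have e : fc (s^+2) (s - 1 - 1/(2*s)) = (14*s^+3 + 2*s^+2 - 4*s - 1) / (8 * s^+3).
  by rewrite /fc; field; rewrite s0.
rewrite e; apply: divr_gt0; nra.
Qed.

Lemma fU_neg (R : realFieldType) (s c : R) : 2 <= s -> 0 < c -> 8 <= (1 - 2*c) * s ->
  fc (s^+2) (s - 1 - c/s) < 0.
Proof.
move=> hs hc hd; have s0 : s != 0 by apply/negP => /eqP s0; rewrite s0 in hs; lra.
have e : fc (s^+2) (s - 1 - c/s) = ((2*c-1)*s^+5 + (1-2*c)*s^+4 + (4*c-c^+2)*s^+3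
   + (3*c^+2-c)*s^+2 - 2*c^+2*s - c^+3) / (s^+3).
  by rewrite /fc; field; rewrite s0.
have c2 : c < 1/2 by nra.
rewrite e pmulr_llt0; last by rewrite invr_gt0; nra.
have sp : 0 < s by lra.
have hs4 : 0 < s^+4 by rewrite exprn_gt0.
have hs3 : 0 < s^+3 by rewrite exprn_gt0.
have h1 : (2*c-1)*s^+5 + (1-2*c)*s^+4 <= - 4 * s^+4.
  have -> : (2*c-1)*s^+5 + (1-2*c)*s^+4 = - ((1 - 2*c)*s) * s^+4 + (1 - 2*c) * s^+4 by ring.
  have : (1 - 2*c) * s^+4 <= (1 - 2*c) * s^+4 * (s / 2) by nra.
  nra.
have h2 : (4*c-c^+2)*s^+3 <= 2 * s^+3 by nra.
have h3 : (3*c^+2-c)*s^+2 <= s^+2 by nra.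
have h4 : 0 <= 2*c^+2*s + c^+3 by nra.
nra.
Qed.

Lemma t_exists (R : rcfType) (s : R) : 2 <= s^+2 -> 0 < s ->
  exists t, [/\ 0 < t, t < s & fc (s^+2) t = 0].
Proof.
move=> hq hs; set q := s^+2.
pose p : {poly R} := - ('X^3 - (q-1)%:P * 'X^2 - (3*q)%:P * 'X + (q*(q-1))%:P).
have pE x : p.[x] = - fc q x by rewrite /p /fc !hornerE.
have f0 : fc q 0 = q * (q - 1) by rewrite /fc; ring.
have fs : fc q s = - 2 * s^+3 by rewrite /fc /q; ring.
have s3 : 0 < s^+3 by rewrite exprn_gt0.
have [x /andP[x0 xs] rx] : exists2 x, 0 <= x <= s & root p x.
  apply: poly_ivt; first lra.
  rewrite !pE f0 fs; apply/andP; split; last lra.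
  rewrite oppr_le0; apply: mulr_ge0; rewrite /q; lra.
move: rx; rewrite /root pE oppr_eq0 => /eqP fx.
exists x; split => //.
- rewrite lt_neqAle x0 andbT; apply/negP => /eqP x0'; move: fx; rewrite -x0' f0.
  move/eqP; rewrite mulf_eq0 => /orP[]/eqP; rewrite /q; lra.
- rewrite lt_neqAle xs andbT; apply/negP => /eqP xs'; move: fx; rewrite xs' fs; lra.
Qed.

Lemma t_bounds (R : realFieldType) (s t c : R) : 2 <= s -> 0 < t -> t < s ->
  fc (s^+2) t = 0 -> 0 < c -> 8 <= (1 - 2*c) * s ->
  s - 1 - 1/(2*s) < t /\ t < s - 1 - c/s.
Proof.
move=> hs ht hts ft hc hd.
have sp : 0 < s by lra.
have hq : 2 <= s^+2 by nra.
have c2 : c < 1/2 by nra.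
have hL : 0 < s - 1 - 1/(2*s).
  have : 1/(2*s) <= 1/4 by rewrite ler_pdivrMr; nra.
  lra.
have hcs : c / s <= 1 / (2 * s).
  rewrite ler_pdivrMr // mulrAC ler_pdivlMr; nra.
have hsL : 0 < 1 / (2 * s) by apply: divr_gt0 => //; lra.
have hcs0 : 0 < c / s by apply: divr_gt0.
split.
- rewrite ltNge; apply/negP => htL.
  have := fL_pos hs; rewrite le_eqVlt in htL; case/orP: htL => [/eqP <-|htL].
    by rewrite ft ltxx.
  have := fc_decr hq sp (ltW ht) htL; rewrite ft; lra.
- rewrite ltNge; apply/negP => hUt.
  have := fU_neg hs hc hd; rewrite le_eqVlt in hUt; case/orP: hUt => [/eqP ->|hUt].
    by rewrite ft ltxx.
  have hU0 : 0 <= s - 1 - c/s by lra.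
  have := fc_decr hq sp hU0 hUt (ltW hts).
  rewrite ft => h1 h2; lra.
Qed.
Lemma inl_inr (A B : eqType) (x:A)(y:B): (inl x == inr y :> A + B) = false. Proof. by []. Qed.
Lemma inr_inl (A B : eqType) (x:A)(y:B): (inr y == inl x :> A + B) = false. Proof. by []. Qed.
Lemma inl_eq (A B : eqType) (x y:A): (inl x == inl y :> A + B) = (x == y). Proof. by []. Qed.
Lemma inr_eq (A B : eqType) (x y:B): (inr x == inr y :> A + B) = (x == y). Proof. by []. Qed.
Definition sumE := (inl_inr, inr_inl, inl_eq, inr_eq).

Lemma sum_bool_card (T : finType) (p : pred T) :
  \sum_x ((p x)%:R : algC) = (#|[set x | p x]|)%:R.
Proof.
rewrite cardsE -sum1_card natr_sum [RHS]big_mkcond /=; apply: eq_bigr => x _.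
by rewrite unfold_in; case: (p x).
Qed.

Lemma sum_delta (T : finType) (F : T -> algC) (b : T) :
  \sum_y F y * (y == b)%:R = F b.
Proof.
rewrite (bigD1 b) //= eqxx mulr1 big1 ?addr0 // => y /negPf ->; by rewrite mulr0.
Qed.

Lemma card_unique (T : finType) (p : pred T) : (exists! y, p y) -> #|[set y | p y]| = 1%N.
Proof.
case=> y0 [py0 uy0]; have -> : [set y | p y] = [set y0].
  apply/setP => y; rewrite !inE; apply/idP/eqP => [/uy0 -> //|->//].
by rewrite cards1.
Qed.

Section PP.
End PP.

Lemma pt_deg (P L : finType) (inc : P -> L -> bool) q : projective_plane inc q ->
  forall x, \sum_y ((inc x y)%:R : algC) = (q.+1)%:R.
Proof. by case=> _ _ h _ _ x; rewrite sum_bool_card h. Qed.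

Lemma ln_deg (P L : finType) (inc : P -> L -> bool) q : projective_plane inc q ->
  forall y, \sum_x ((inc x y)%:R : algC) = (q.+1)%:R.
Proof. by case=> _ h _ _ _ y; rewrite sum_bool_card h. Qed.

Lemma pt_pair (P L : finType) (inc : P -> L -> bool) q : projective_plane inc q ->
  forall x x', \sum_y ((inc x y)%:R * (inc x' y)%:R : algC) = if x == x' then (q.+1)%:R else 1.
Proof.
move=> pp x x'; have [<-|nx] := eqVneq x x'.
  rewrite -(pt_deg pp x); apply: eq_bigr => y _; by case: (inc x y); rewrite ?mulr1 ?mulr0.
rewrite (eq_bigr (fun y => ((inc x y && inc x' y)%:R : algC))); last first.
  by move=> y _; case: (inc x y); case: (inc x' y); rewrite ?mulr1 ?mulr0.
case: pp => _ _ _ h _; rewrite sum_bool_card card_unique //; exact: h.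
Qed.

Lemma ln_pair (P L : finType) (inc : P -> L -> bool) q : projective_plane inc q ->
  forall y y', \sum_x ((inc x y)%:R * (inc x y')%:R : algC) = if y == y' then (q.+1)%:R else 1.
Proof.
move=> pp y y'; have [<-|ny] := eqVneq y y'.
  rewrite -(ln_deg pp y); apply: eq_bigr => x _; by case: (inc x y); rewrite ?mulr1 ?mulr0.
rewrite (eq_bigr (fun x => ((inc x y && inc x y')%:R : algC))); last first.
  by move=> x _; case: (inc x y); case: (inc x y'); rewrite ?mulr1 ?mulr0.
case: pp => _ _ _ _ h; rewrite sum_bool_card card_unique //; exact: h.
Qed.

Definition swr (T : eqType) (v0 v1 u w : T) : bool :=
  ((u == v0) && (w == v1)) || ((u == v1) && (w == v0)).

Definition Wk (P L : finType) (inc : P -> L -> bool) (a : P) (b : L) (k : algC)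
  (u w : P + L) : algC :=
  (incidence_graph inc u w)%:R - k * (swr (inl a) (inr b) u w)%:R.

Lemma Wsum_inl (P L : finType) (inc : P -> L -> bool) a b k (h : P + L -> algC) x :
  \sum_u h u * Wk inc a b k u (inl x) =
  \sum_y h (inr y) * (inc x y)%:R - k * (x == a)%:R * h (inr b).
Proof.
rewrite big_sumType /= big1 ?add0r; last first.
  by move=> x' _; rewrite /Wk /swr /= !sumE /= andbF mulr0 subr0 mulr0.
rewrite /Wk /swr /=.
under eq_bigr => y _ do rewrite !sumE /=.
under eq_bigr => y _ do rewrite mulrBr.
rewrite sumrB; congr (_ - _).
rewrite -(sum_delta (fun y => k * (x == a)%:R * h (inr y)) b); apply: eq_bigr => y _.
by case: (y == b); case: (x == a) => /=; ring.
Qed.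

Lemma Wsum_inr (P L : finType) (inc : P -> L -> bool) a b k (h : P + L -> algC) y :
  \sum_u h u * Wk inc a b k u (inr y) =
  \sum_x h (inl x) * (inc x y)%:R - k * (y == b)%:R * h (inl a).
Proof.
rewrite big_sumType /= [X in _ + X]big1 ?addr0; last first.
  by move=> y' _; rewrite /Wk /swr /= !sumE /= andbF !mulr0 subr0 mulr0.
rewrite /Wk /swr /=.
under eq_bigr => x _ do rewrite !sumE /=.
under eq_bigr => x _ do rewrite mulrBr.
rewrite sumrB; congr (_ - _).
rewrite -(sum_delta (fun x => k * (y == b)%:R * h (inl x)) a); apply: eq_bigr => x _.
by case: (y == b); case: (x == a) => /=; ring.
Qed.

Lemma class_nec (P L : finType) (inc : P -> L -> bool) q (pp : projective_plane inc q)
  a b (hab : inc a b) k z (h : P + L -> algC) :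
  (forall w, \sum_u h u * Wk inc a b k u w = z * h w) ->
  (forall x, (z^+2 - q%:R) * h (inl x) = \sum_x' h (inl x') - k * (inc x b)%:R * h (inl a)
       - k * z * (x == a)%:R * h (inr b)) /\
  (forall y, (z^+2 - q%:R) * h (inr y) = \sum_y' h (inr y') - k * (inc a y)%:R * h (inr b)
       - k * z * (y == b)%:R * h (inl a)).
Proof.
move=> heig.
have EP x : z * h (inl x) = \sum_y h (inr y) * (inc x y)%:R - k * (x == a)%:R * h (inr b).
  by rewrite -Wsum_inl heig.
have EL y : z * h (inr y) = \sum_x h (inl x) * (inc x y)%:R - k * (y == b)%:R * h (inl a).
  by rewrite -Wsum_inr heig.
split.
- move=> x.
  have S1 : \sum_y (z * h (inr y)) * (inc x y)%:R =
     \sum_x' h (inl x') * (if x' == x then (q.+1)%:R else 1) - k * (inc x b)%:R * h (inl a).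
    under eq_bigr => y _ do rewrite EL mulrBl.
    rewrite sumrB; congr (_ - _).
      under eq_bigr => y _ do rewrite mulr_suml.
      rewrite exchange_big; apply: eq_bigr => x' _; rewrite -(pt_pair pp x' x) mulr_sumr.
      by apply: eq_bigr => y _; ring.
    rewrite -(sum_delta (fun y => k * (inc x y)%:R * h (inl a)) b).
    by apply: eq_bigr => y _; ring.
  have S2 : \sum_x' h (inl x') * (if x' == x then (q.+1)%:R else 1) =
            \sum_x' h (inl x') + q%:R * h (inl x).
    rewrite (bigD1 x) //= eqxx [in RHS](bigD1 x) //=.
    rewrite (eq_bigr (fun x' => h (inl x'))); last by move=> x' /negPf ->; rewrite mulr1.
    by rewrite -addn1 natrD; ring.
  have -> : (z^+2 - q%:R) * h (inl x) = z * (z * h (inl x)) - q%:R * h (inl x) by ring.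
  rewrite EP mulrBr mulr_sumr.
  under eq_bigr => y _ do rewrite mulrA.
  rewrite S1 S2; ring.
- move=> y.
  have S1 : \sum_x (z * h (inl x)) * (inc x y)%:R =
     \sum_y' h (inr y') * (if y' == y then (q.+1)%:R else 1) - k * (inc a y)%:R * h (inr b).
    under eq_bigr => x _ do rewrite EP mulrBl.
    rewrite sumrB; congr (_ - _).
      under eq_bigr => x _ do rewrite mulr_suml.
      rewrite exchange_big; apply: eq_bigr => y' _; rewrite -(ln_pair pp y' y) mulr_sumr.
      by apply: eq_bigr => x _; ring.
    rewrite -(sum_delta (fun x => k * (inc x y)%:R * h (inr b)) a).
    by apply: eq_bigr => x _; ring.
  have S2 : \sum_y' h (inr y') * (if y' == y then (q.+1)%:R else 1) =
            \sum_y' h (inr y') + q%:R * h (inr y).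
    rewrite (bigD1 y) //= eqxx [in RHS](bigD1 y) //=.
    rewrite (eq_bigr (fun y' => h (inr y'))); last by move=> y' /negPf ->; rewrite mulr1.
    by rewrite -addn1 natrD; ring.
  have -> : (z^+2 - q%:R) * h (inr y) = z * (z * h (inr y)) - q%:R * h (inr y) by ring.
  rewrite EL mulrBr mulr_sumr.
  under eq_bigr => x _ do rewrite mulrA.
  rewrite S1 S2; ring.
Qed.

Lemma alg_core (c z k q al be SP SL : algC) :
  c * al = SP - k * al - k * z * be -> c * be = SL - k * be - k * z * al ->
  c * z * al = (q + 1) * SL - k * (q + 1) * be - k * z * al - k * c * be ->
  c * z * be = (q + 1) * SP - k * (q + 1) * al - k * z * be - k * c * al ->
  z * (c - q * k) = c * (q + 1 - k) \/ z * (c - q * k) = - (c * (q + 1 - k)) \/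
  [/\ al = 0, be = 0, SP = 0 & SL = 0].
Proof.
move=> h1 h2 h3 h4.
have e1 : z * (c - q * k) * al = c * (q + 1 - k) * be.
  apply/eqP; rewrite -subr_eq0.
  have -> : z * (c - q * k) * al - c * (q + 1 - k) * be = (c * z * al - ((q + 1) * SL - k * (q + 1) * be - k * z * al - k * c * be))
     - (q + 1) * (c * be - (SL - k * be - k * z * al)) by ring.
  by rewrite h3 h2 !subrr mulr0 subrr.
have e2 : z * (c - q * k) * be = c * (q + 1 - k) * al.
  apply/eqP; rewrite -subr_eq0.
  have -> : z * (c - q * k) * be - c * (q + 1 - k) * al = (c * z * be - ((q + 1) * SP - k * (q + 1) * al - k * z * be - k * c * al))
     - (q + 1) * (c * al - (SP - k * al - k * z * be)) by ring.
  by rewrite h4 h1 !subrr mulr0 subrr.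
move: e1 e2; set D := z * (c - q * k); set E := c * (q + 1 - k) => e1 e2.
have [DE|DnE] := eqVneq D E; first by left.
have [DmE|DnmE] := eqVneq D (- E); first by right; left.
right; right.
have s1 : (D - E) * (al + be) = 0 by rewrite mulrBl !mulrDr e1 e2; ring.
have s2 : (D + E) * (al - be) = 0 by rewrite mulrDl !mulrBr e1 e2; ring.
move/eqP: s1; rewrite mulf_eq0 subr_eq0 (negPf DnE) /= => /eqP s1.
have DEn : D + E != 0 by rewrite addr_eq0.
move/eqP: s2; rewrite mulf_eq0 (negPf DEn) /= subr_eq0 => /eqP s2.
have al0 : al = 0.
  have : 2 * al = al + be by rewrite s2; ring.
  rewrite s1.
  by move/eqP; rewrite mulf_eq0 pnatr_eq0 /= => /eqP.
have be0 : be = 0 by rewrite -s2.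
split => //.
- by move: h1; rewrite al0 be0 !mulr0 !subr0 => <-.
- by move: h2; rewrite al0 be0 !mulr0 !subr0 => <-.
Qed.

Lemma class_poly (P L : finType) (inc : P -> L -> bool) q (pp : projective_plane inc q)
  a b (hab : inc a b) k z (h : P + L -> algC) :
  (exists u, h u != 0) ->
  (forall w, \sum_u h u * Wk inc a b k u w = z * h w) ->
  z^+2 = q%:R \/ z * ((z^+2 - q%:R) - q%:R * k) = (z^+2 - q%:R) * (q%:R + 1 - k)
   \/ z * ((z^+2 - q%:R) - q%:R * k) = - ((z^+2 - q%:R) * (q%:R + 1 - k)).
Proof.
move=> [u hu] heig.
have [c0|cn0] := eqVneq (z^+2 - q%:R) 0; first by left; apply/eqP; rewrite -subr_eq0 c0.
right; have [NP NL] := class_nec pp hab heig.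
have EP x : z * h (inl x) = \sum_y h (inr y) * (inc x y)%:R - k * (x == a)%:R * h (inr b).
  by rewrite -Wsum_inl heig.
have EL y : z * h (inr y) = \sum_x h (inl x) * (inc x y)%:R - k * (y == b)%:R * h (inl a).
  by rewrite -Wsum_inr heig.
have h1 : (z^+2 - q%:R) * h (inl a) = \sum_x h (inl x) - k * h (inl a) - k * z * h (inr b).
  by rewrite NP hab eqxx /= mulr1; ring.
have h2 : (z^+2 - q%:R) * h (inr b) = \sum_y h (inr y) - k * h (inr b) - k * z * h (inl a).
  by rewrite NL hab eqxx /= mulr1; ring.
have S3 : \sum_y ((z^+2 - q%:R) * h (inr y)) * (inc a y)%:R = (q%:R + 1) * \sum_y h (inr y)
     - k * (q%:R + 1) * h (inr b) - k * z * h (inl a).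
  rewrite (eq_bigr (fun y => (\sum_y h (inr y)) * (inc a y)%:R - k * h (inr b) * (inc a y)%:R
     - (k * z * h (inl a) * (inc a y)%:R) * (y == b)%:R)); last first.
    by move=> y _; rewrite NL; case: (inc a y); case: (y == b) => /=; ring.
  rewrite !sumrB -!mulr_sumr sum_delta hab (pt_deg pp a) -addn1 natrD /=; ring.
have S4 : \sum_x ((z^+2 - q%:R) * h (inl x)) * (inc x b)%:R = (q%:R + 1) * \sum_x h (inl x)
     - k * (q%:R + 1) * h (inl a) - k * z * h (inr b).
  rewrite (eq_bigr (fun x => (\sum_x h (inl x)) * (inc x b)%:R - k * h (inl a) * (inc x b)%:R
     - (k * z * h (inr b) * (inc x b)%:R) * (x == a)%:R)); last first.
    by move=> x _; rewrite NP; case: (inc x b); case: (x == a) => /=; ring.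
  rewrite !sumrB -!mulr_sumr sum_delta hab (ln_deg pp b) -addn1 natrD /=; ring.
have h3 : (z^+2 - q%:R) * z * h (inl a) = (q%:R + 1) * \sum_y h (inr y) - k * (q%:R + 1) * h (inr b)
     - k * z * h (inl a) - k * (z^+2 - q%:R) * h (inr b).
  rewrite -mulrA EP mulrBr mulr_sumr.
  under eq_bigr => y _ do rewrite mulrA.
  rewrite S3 eqxx /=; ring.
have h4 : (z^+2 - q%:R) * z * h (inr b) = (q%:R + 1) * \sum_x h (inl x) - k * (q%:R + 1) * h (inl a)
     - k * z * h (inr b) - k * (z^+2 - q%:R) * h (inl a).
  rewrite -mulrA EL mulrBr mulr_sumr.
  under eq_bigr => x _ do rewrite mulrA.
  rewrite S4 eqxx /=; ring.
have [e|[e|[al0 be0 SP0 SL0]]] := alg_core h1 h2 h3 h4.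
- by left.
- by right.
exfalso; move: hu; apply/negP; rewrite negbK.
case: u => [x|y].
- have := NP x; rewrite al0 be0 SP0 !mulr0 !subr0 => /eqP; rewrite mulf_eq0 (negPf cn0) //.
- have := NL y; rewrite al0 be0 SL0 !mulr0 !subr0 => /eqP; rewrite mulf_eq0 (negPf cn0) //.
Qed.

Definition hvec (P L : finType) (inc : P -> L -> bool) (a : P) (b : L) (q : nat) (t : algC)
  (u : P + L) : algC :=
  let al := q%:R * (t - q%:R) in let ga := (t + 1) * (t - q%:R) in let pi := t + 1 in
  match u with
  | inl x => pi + (ga - pi) * (inc x b)%:R + (al - ga) * (x == a)%:R
  | inr y => pi + (ga - pi) * (inc a y)%:R + (al - ga) * (y == b)%:R
  end.

Lemma hvec_eig (P L : finType) (inc : P -> L -> bool) q (pp : projective_plane inc q)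
  a b (hab : inc a b) (t : algC) : fc q%:R t = 0 ->
  forall w, \sum_u hvec inc a b q t u * Wk inc a b 2 u w = t * hvec inc a b q t w.
Proof.
move=> ft [x|y].
- rewrite Wsum_inl /=.
  rewrite (eq_bigr (fun y => (t + 1) * (inc x y)%:R + ((t + 1) * (t - q%:R) - (t + 1)) * ((inc a y)%:R * (inc x y)%:R)
     + ((q%:R * (t - q%:R) - (t + 1) * (t - q%:R)) * (inc x y)%:R) * (y == b)%:R)); last by move=> y _; ring.
  rewrite !big_split /= -!mulr_sumr sum_delta (pt_deg pp x) (pt_pair pp a x).
  have [<-|nax] := eqVneq a x.
    rewrite hab eqxx -addn1 natrD /=; ring.
  have nxa : (x == a) = false by rewrite eq_sym (negPf nax).
  rewrite ?(negPf nax) ?nxa /=.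
  case: (inc x b); rewrite -addn1 natrD /=.
    by rewrite -[LHS]addr0 -ft /fc; ring.
  ring.
- rewrite Wsum_inr /=.
  rewrite (eq_bigr (fun x => (t + 1) * (inc x y)%:R + ((t + 1) * (t - q%:R) - (t + 1)) * ((inc x b)%:R * (inc x y)%:R)
     + ((q%:R * (t - q%:R) - (t + 1) * (t - q%:R)) * (inc x y)%:R) * (x == a)%:R)); last by move=> x _; ring.
  rewrite !big_split /= -!mulr_sumr sum_delta (ln_deg pp y) (ln_pair pp b y).
  have [<-|nby] := eqVneq b y.
    rewrite hab eqxx -addn1 natrD /=; ring.
  have nyb : (y == b) = false by rewrite eq_sym (negPf nby).
  rewrite ?(negPf nby) ?nyb /=.
  case: (inc a y); rewrite -addn1 natrD /=.
    by rewrite -[LHS]addr0 -ft /fc; ring.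
  ring.
Qed.

Lemma sum_reindex_rank (V : finType) (F : 'I_#|V| -> algC) :
  \sum_i F i = \sum_u F (enum_rank u).
Proof. by rewrite (reindex (@enum_rank V)) //; apply: onW_bij; exact: enum_rank_bij. Qed.

Lemma root_eigfun (V : finType) (E : rel V) z :
  root (char_poly (adjmx E)) z ->
  exists g : V -> algC, (exists u, g u != 0) /\
    forall w, \sum_u g u * (E u w)%:R = z * g w.
Proof.
rewrite -eigenvalue_root_char => /eigenvalueP [v hv vn0].
exists (fun u => v 0 (enum_rank u)); split.
  case: (pickP (fun j => v 0 j != 0)) => [j hj | h0].
    by exists (enum_val j); rewrite enum_valK.
  case/eqP: vn0; apply/rowP => j; rewrite mxE; apply/eqP; exact: negbFE (h0 j).
move=> w; have := congr1 (fun M : 'rV_#|V| => M ord0 (enum_rank w)) hv; rewrite /= !mxE => <-.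
rewrite sum_reindex_rank; apply: eq_bigr => u _; by rewrite /adjmx mxE !enum_rankK.
Qed.

Lemma eigfun_root (V : finType) (E : rel V) z (g : V -> algC) :
  (exists u, g u != 0) -> (forall w, \sum_u g u * (E u w)%:R = z * g w) ->
  root (char_poly (adjmx E)) z.
Proof.
move=> [u hu] heig; rewrite -eigenvalue_root_char; apply/eigenvalueP.
exists (\row_i g (enum_val i)).
  apply/rowP => j; rewrite !mxE -heig sum_reindex_rank; apply: eq_bigr => x _.
  by rewrite !mxE enum_rankK.
apply/eqP => h0; have := congr1 (fun M : 'rV_#|V| => M ord0 (enum_rank u)) h0.
by rewrite !mxE enum_rankK; apply/eqP.
Qed.

Lemma herm_real (V : finType) (W : V -> V -> algC) (g : V -> algC) z :
  (forall u w, W u w = W w u) -> (forall u w, (W u w)^* = W u w) ->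
  (exists u, g u != 0) -> (forall w, \sum_u g u * W u w = z * g w) ->
  z \is Creal.
Proof.
move=> Wsym Wre [u0 hu0] heig.
pose S := \sum_w (g w)^* * \sum_u g u * W u w.
have SE : S = z * \sum_w `|g w| ^+ 2.
  rewrite /S mulr_sumr; apply: eq_bigr => w _; rewrite heig normCK; ring.
have Sr : S^* = S.
  rewrite /S rmorph_sum /=.
  under eq_bigr => w _ do rewrite rmorphM /= conjCK rmorph_sum /= mulr_sumr.
  rewrite exchange_big /=; apply: eq_bigr => u _; rewrite mulr_sumr; apply: eq_bigr => w _.
  by rewrite rmorphM /= Wre Wsym; ring.
have npos : 0 < \sum_w `|g w| ^+ 2.
  rewrite (bigD1 u0) //=; apply: ltr_wpDr; first by apply: sumr_ge0 => w _; rewrite exprn_ge0.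
  by rewrite exprn_gt0 // normr_gt0.
have -> : z = S / \sum_w `|g w| ^+ 2 by rewrite SE mulfK // gt_eqF.
apply: rpred_div; first by rewrite CrealE Sr.
exact: gtr0_real.
Qed.

Lemma char_horner n (A : 'M[algC]_n) x : (char_poly A).[x] = \det (x%:M - A).
Proof.
rewrite /char_poly -[LHS]/(horner_eval x _) -det_map_mx; congr (\det _).
apply/matrixP => i j; rewrite !mxE /horner_eval.
rewrite -[LHS]/((_ : {poly algC}).[x]); by case: (i == j); rewrite /= !hornerE.
Qed.

Lemma char_sym (V : finType) (E : rel V) (d : V -> algC) :
  (forall x, d x * d x = 1) -> (forall x y, E x y -> d x * d y = -1) ->
  forall x, (char_poly (adjmx E)).[x] = (-1) ^+ #|V| * (char_poly (adjmx E)).[- x].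
Proof.
move=> d2 dE x; rewrite !char_horner.
pose D : 'M[algC]_#|V| := diag_mx (\row_i d (enum_val i)).
have DD : \det D * \det D = 1.
  by rewrite /D det_diag -big_split /=; apply: big1 => i _; rewrite mxE d2.
have key : D *m (x%:M - adjmx E) *m D = x%:M + adjmx E.
  rewrite /D mul_diag_mx mul_mx_diag; apply/matrixP => i j; rewrite !mxE.
  case: eqP => [->|_] /=.
    rewrite mulrC mulrA d2.
    case hE : (E (enum_val j) (enum_val j)); last by rewrite /= subr0 addr0 mul1r.
    by have := dE _ _ hE; rewrite d2 => /eqP; rewrite -subr_eq0 opprK (pnatr_eq0 _ 2).
  rewrite !mulr0n !sub0r add0r.
  case hE : (E (enum_val i) (enum_val j)); last by rewrite /= oppr0 mulr0 mul0r.
  by rewrite /= mulrC mulrA [d _ * _]mulrC (dE _ _ hE); ring.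
have -> : (- x)%:M - adjmx E = (-1) *: (x%:M + adjmx E).
  by apply/matrixP => i j; rewrite !mxE; case: (i == j); rewrite /= ?mulr1n ?mulr0n; ring.
rewrite detZ mulrA -exprMn mulrNN mulr1 expr1n mul1r -key !det_mulmx.
by rewrite mulrC mulrA DD mul1r.
Qed.

Lemma prod_opp_seq (s : seq algC) (F : algC -> algC) :
  \prod_(z <- s) (- F z) = (-1) ^+ size s * \prod_(z <- s) F z.
Proof.
elim: s => [|y s IH]; first by rewrite !big_nil expr0 mul1r.
by rewrite !big_cons IH /= exprS; ring.
Qed.

Lemma poly_pointwise (p1 p2 : {poly algC}) : (forall x, p1.[x] = p2.[x]) -> p1 = p2.
Proof.
move=> h; apply/eqP; rewrite -subr_eq0; apply/eqP.
apply: (@roots_geq_poly_eq0 _ _ [seq i%:R | i <- iota 0 (size (p1 - p2))]).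
- by apply/allP => y /mapP [i _ ->]; rewrite /root !hornerE h subrr.
- rewrite map_inj_uniq ?iota_uniq // => i j /eqP; by rewrite eqr_nat => /eqP.
- by rewrite size_map size_iota.
Qed.

Lemma roots_sym (p : {poly algC}) (rs : seq algC) :
  p = \prod_(z <- rs) ('X - z%:P) -> ~~ odd (size rs) ->
  (forall x, p.[x] = p.[- x]) -> perm_eq rs (map -%R rs).
Proof.
move=> pE ev hsym; apply: prod_XsubC_eq; rewrite -pE big_map.
apply: poly_pointwise => x; rewrite hsym pE !horner_prod.
under eq_bigr => z _ do rewrite !hornerE.
under [RHS]eq_bigr => z _ do rewrite !hornerE.
rewrite (eq_bigr (fun z => - (x - - z))); last by move=> z _; ring.
by rewrite prod_opp_seq -signr_odd (negbTE ev) expr0 mul1r.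
Qed.

Lemma sum_bool2 (F : bool -> algC) : \sum_b F b = F true + F false.
Proof. by rewrite big_bool. Qed.

Lemma sum_pair (A B : finType) (F : A * B -> algC) : \sum_x F x = \sum_a \sum_b F (a, b).
Proof. by rewrite pair_bigA; apply: eq_bigr => -[a b]. Qed.

Lemma dsw_val (T : finType) (e : rel T) (esym : symmetric e) v0 v1 (he : e v0 v1) b u c w :
  ((double_switch e v0 v1 (b, u) (c, w))%:R : algC) =
  if b == c then (e u w)%:R - (swr v0 v1 u w)%:R else (swr v0 v1 u w)%:R.
Proof.
rewrite /double_switch -/(swr v0 v1 u w).
have hs : swr v0 v1 u w -> e u w.
  by rewrite /swr => /orP[/andP[/eqP -> /eqP ->]|/andP[/eqP -> /eqP ->]] //; rewrite esym.
case: (b == c) => //; case hsw : (swr v0 v1 u w).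
  by rewrite (hs hsw) /= subrr.
by rewrite andbT subr0.
Qed.

Lemma dsw_split (T : finType) (e : rel T) (esym : symmetric e) v0 v1 (he : e v0 v1) z
  (g : bool * T -> algC) :
  (forall w, \sum_x g x * (double_switch e v0 v1 x w)%:R = z * g w) ->
  (forall w, \sum_u (g (true, u) + g (false, u)) * (e u w)%:R = z * (g (true, w) + g (false, w))) /\
  (forall w, \sum_u (g (true, u) - g (false, u)) * ((e u w)%:R - 2 * (swr v0 v1 u w)%:R)
        = z * (g (true, w) - g (false, w))).
Proof.
move=> heig.
have E d w : \sum_u g (d, u) * ((e u w)%:R - (swr v0 v1 u w)%:R)
     + \sum_u g (~~ d, u) * (swr v0 v1 u w)%:R = z * g (d, w).
  rewrite -heig sum_pair sum_bool2.
  case: d.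
  - by congr (_ + _); apply: eq_bigr => u _; rewrite dsw_val.
  - by rewrite [in LHS]addrC; congr (_ + _); apply: eq_bigr => u _; rewrite dsw_val.
split => w.
- rewrite mulrDr -(E true w) -(E false w) /= -!big_split /=; apply: eq_bigr => u _; ring.
- rewrite mulrBr -(E true w) -(E false w) -!big_split -sumrB /=; apply: eq_bigr => u _; ring.
Qed.

Lemma dsw_lift (T : finType) (e : rel T) (esym : symmetric e) v0 v1 (he : e v0 v1) z
  (h : T -> algC) :
  (forall w, \sum_u h u * ((e u w)%:R - 2 * (swr v0 v1 u w)%:R) = z * h w) ->
  forall w, \sum_x (if x.1 then h x.2 else - h x.2) * (double_switch e v0 v1 x w)%:R
     = z * (if w.1 then h w.2 else - h w.2).
Proof.
move=> heig [d w]; rewrite sum_pair sum_bool2.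
rewrite (eq_bigr (fun u => h u * (if true == d then (e u w)%:R - (swr v0 v1 u w)%:R
   else (swr v0 v1 u w)%:R))); last by move=> u _; rewrite dsw_val.
rewrite [X in _ + X](eq_bigr (fun u => - h u * (if false == d then (e u w)%:R - (swr v0 v1 u w)%:R
   else (swr v0 v1 u w)%:R))); last by move=> u _; rewrite dsw_val.
case: d => /=; rewrite ?mulrN -heig ?mulr_sumr -?sumrN -big_split /=; apply: eq_bigr => u _; ring.
Qed.

Lemma mid_sorted (R : realDomainType) (l : seq R) (n : nat) (t : R) :
  sorted (fun x y => y <= x) l -> size l = (n + n)%N -> 0 < t -> t \in l -> - t \in l ->
  (forall x, x \in l -> x != 0) -> (forall x, x \in l -> 0 < x -> t <= x) ->
  (forall x, x \in l -> x < 0 -> x <= - t) ->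
  count (fun x => 0 < x) l = n -> nth 0 l n.-1 = t /\ nth 0 l n = - t.
Proof.
move=> so sz t0 tl mtl nz posb negb cnt.
have tr : transitive (fun x y : R => y <= x) by move=> y x z /= h1 h2; exact: le_trans h2 h1.
have rf : reflexive (fun x y : R => y <= x) by move=> x /=.
have mono := sorted_leq_nth tr rf 0 so.
pose i0 := find (fun x => x <= 0) l.
have hasn : has (fun x => x <= 0) l by apply/hasP; exists (- t) => //; rewrite oppr_le0 ltW.
have i0s : (i0 < size l)%N by rewrite -has_find.
have bef i : (i < i0)%N -> 0 < nth 0 l i.
  by move=> hi; have := before_find 0 hi; rewrite ltNge => ->.
have aft i : (i0 <= i)%N -> (i < size l)%N -> nth 0 l i <= 0.
  move=> h1 h2; apply: le_trans (nth_find 0 hasn).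
  exact: (mono i0 i).
have ci0 : count (fun x => 0 < x) l = i0.
  rewrite -(cat_take_drop i0 l) count_cat.
  have c1 : count (fun x => 0 < x) (take i0 l) = i0.
    have : all (fun x => 0 < x) (take i0 l).
      apply/(all_nthP 0) => i; rewrite size_take i0s => hi.
      by rewrite nth_take // bef.
    by rewrite all_count size_take i0s => /eqP.
  have c2 : count (fun x => 0 < x) (drop i0 l) = 0%N.
    apply/eqP; rewrite -leqn0 leqNgt -has_count; apply/hasPn => x /(nthP 0) [j hj <-].
    rewrite nth_drop -leNgt; apply: aft; first exact: leq_addr.
    by move: hj; rewrite size_drop ltn_subRL.
  by rewrite c1 c2 addn0.
have ni0 : n = i0 by rewrite -cnt ci0.
have jt := index_mem t l; rewrite tl in jt.
have jtn : (index t l < n)%N.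
  rewrite ni0 ltnNge; apply/negP => h; have := aft _ h jt; rewrite nth_index //.
  by rewrite leNgt t0.
have n0 : (0 < n)%N by apply: leq_ltn_trans jtn.
split.
- have hn1 : (n.-1 < size l)%N by rewrite sz; apply: (leq_ltn_trans (leq_pred n)); rewrite -addn1 leq_add2l.
  apply/le_anti/andP; split.
    have := mono (index t l) n.-1 jt hn1; rewrite nth_index //; apply.
    by rewrite -ltnS prednK.
  apply: posb; first exact: mem_nth.
  by apply: bef; rewrite -ni0 prednK.
- have hn : (n < size l)%N by rewrite ni0.
  have jm := index_mem (- t) l; rewrite mtl in jm.
  have jmn : (n <= index (- t) l)%N.
    rewrite leqNgt; apply/negP => h; rewrite ni0 in h; have := bef _ h; rewrite nth_index //.
    by rewrite oppr_gt0 ltNge ltW.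
  apply/le_anti/andP; split.
    apply: negb; first exact: mem_nth.
    rewrite lt_neqAle nz ?mem_nth //=; apply: aft; [by rewrite ni0 | exact: hn].
  by have := mono n (index (- t) l) hn jm jmn; rewrite nth_index.
Qed.

Lemma ig_sym (P L : finType) (inc : P -> L -> bool) : symmetric (incidence_graph inc).
Proof. by move=> [x|y] [x'|y']. Qed.

Lemma pair_norm (P L : finType) (inc : P -> L -> bool) v0 v1 :
  incidence_graph inc v0 v1 ->
  exists a b, inc a b /\ forall u w, swr v0 v1 u w = swr (inl a) (inr b) u w.
Proof.
case: v0 => [x|y]; case: v1 => [x'|y'] //= h.
- by exists x, y'; split.
- by exists x', y; split => // u w; rewrite /swr orbC.
Qed.

Lemma dsw_sym (T : finType) (e : rel T) (esym : symmetric e) v0 v1 :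
  symmetric (double_switch e v0 v1).
Proof.
move=> [b u] [c w]; rewrite /double_switch eq_sym esym.
have -> : ((u == v0) && (w == v1) || (u == v1) && (w == v0)) =
          ((w == v0) && (u == v1) || (w == v1) && (u == v0)).
  by rewrite orbC [(u == v1) && _]andbC [(u == v0) && _]andbC.
by [].
Qed.

Lemma spec_classC (P L : finType) (inc : P -> L -> bool) q (pp : projective_plane inc q)
  v0 v1 (he : incidence_graph inc v0 v1) z :
  root (char_poly (adjmx (double_switch (incidence_graph inc) v0 v1))) z ->
  z \is Creal /\
  (z^+2 = q%:R \/ z * (z^+2 - q%:R) = (z^+2 - q%:R) * (q%:R + 1) \/
   z * (z^+2 - q%:R) = - ((z^+2 - q%:R) * (q%:R + 1)) \/ fc q%:R z = 0 \/ Qc q%:R z = 0).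
Proof.
have esym := @ig_sym _ _ inc.
have [a [b [hab hsw]]] := pair_norm he.
move/root_eigfun => [g [[[c u] gx] heig]].
split.
  apply: (herm_real (W := fun x y => ((double_switch (incidence_graph inc) v0 v1 x y)%:R : algC)))
     _ _ _ heig; last by exists (c, u).
    by move=> x y; rewrite dsw_sym.
  by move=> x y; rewrite conjC_nat.
have [Hp Hm] := dsw_split esym he heig.
have [gp0|gpn0] := eqVneq (g (true, u) + g (false, u)) 0.
- have gmn0 : g (true, u) - g (false, u) != 0.
    apply/negP => /eqP gm0; move: gx; apply/negP; rewrite negbK.
    have e1 : g (true, u) = 0.
      have : 2 * g (true, u) = 0 by rewrite -(addr0 (0 : algC)) -{1}gp0 -gm0; ring.
      by move/eqP; rewrite mulf_eq0 pnatr_eq0 /= => /eqP.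
    have e2 : g (false, u) = 0 by move/eqP: gp0; rewrite e1 add0r => /eqP.
    by case: c; rewrite ?e1 ?e2.
  have heig2 : forall w, \sum_u (g (true, u) - g (false, u)) * Wk inc a b 2 u w
        = z * (g (true, w) - g (false, w)).
    by move=> w; rewrite -Hm; apply: eq_bigr => y _; rewrite /Wk hsw.
  have [h1|[h1|h1]] := class_poly pp hab (ex_intro _ u gmn0) heig2.
  + by left.
  + right; right; right; left; rewrite /fc -[RHS](subrr (z * (z ^+ 2 - q%:R - q%:R * 2))).
    by rewrite {2}h1; ring.
  + right; right; right; right; rewrite /Qc -[RHS](subrr (z * (z ^+ 2 - q%:R - q%:R * 2))).
    by rewrite {2}h1; ring.
- have heig0 : forall w, \sum_u (g (true, u) + g (false, u)) * Wk inc a b 0 u w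
        = z * (g (true, w) + g (false, w)).
    by move=> w; rewrite -Hp; apply: eq_bigr => y _; rewrite /Wk mul0r subr0.
  have [h1|[h1|h1]] := class_poly pp hab (ex_intro _ u gpn0) heig0.
  + by left.
  + by right; left; move: h1; rewrite mulr0 !subr0.
  + by right; right; left; move: h1; rewrite mulr0 !subr0.
Qed.

Lemma t_root (P L : finType) (inc : P -> L -> bool) q (pp : projective_plane inc q)
  v0 v1 (he : incidence_graph inc v0 v1) (t : algC) : (0 < q)%N -> fc q%:R t = 0 ->
  root (char_poly (adjmx (double_switch (incidence_graph inc) v0 v1))) t.
Proof.
move=> q0 ft.
have esym := @ig_sym _ _ inc.
have [a [b [hab hsw]]] := pair_norm he.
have H := hvec_eig pp hab ft.
have H2 : forall w, \sum_u hvec inc a b q t u * ((incidence_graph inc u w)%:R - 2 * (swr v0 v1 u w)%:R)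
   = t * hvec inc a b q t w.
  by move=> w; rewrite -H; apply: eq_bigr => u _; rewrite /Wk hsw.
apply: (eigfun_root (g := fun x => if x.1 then hvec inc a b q t x.2 else - hvec inc a b q t x.2)).
  exists (true, inl a); rewrite /= hab eqxx /=.
  have -> : t + 1 + ((t + 1) * (t - q%:R) - (t + 1)) * 1 +
      (q%:R * (t - q%:R) - (t + 1) * (t - q%:R)) * 1 = q%:R * (t - q%:R) by ring.
  rewrite mulf_neq0 // ?pnatr_eq0 -?lt0n // subr_eq0; apply/eqP => tq.
  move: ft; rewrite tq /fc.
  have -> : (q%:R : algC) ^+ 3 - (q%:R - 1) * q%:R ^+ 2 - 3 * q%:R * q%:R + q%:R * (q%:R - 1)
     = - ((q * q + q)%:R) by rewrite natrD natrM; ring.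
  have qn0 : (q == 0)%N = false by move: q0; rewrite lt0n => /negPf.
  by move/eqP; rewrite oppr_eq0 pnatr_eq0 addn_eq0 muln_eq0 qn0.
move=> w; exact: (dsw_lift esym he H2 w).
Qed.

Lemma pos_ge_t (q : nat) (s t z : algR) : 2 <= s^+2 -> 0 < s -> s^+2 = q%:R ->
  0 < t -> t < s -> fc q%:R t = 0 ->
  (z^+2 = q%:R \/ z * (z^+2 - q%:R) = (z^+2 - q%:R) * (q%:R + 1) \/
   z * (z^+2 - q%:R) = - ((z^+2 - q%:R) * (q%:R + 1)) \/ fc q%:R z = 0 \/ Qc q%:R z = 0) ->
  z != 0 /\ (0 < z -> t <= z).
Proof.
move=> hq hs sq ht hts ft; rewrite -sq in ft *.
have q0 : 0 < s^+2 by lra.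
case=> [h|[h|[h|[h|h]]]].
- split; first by apply/negP => /eqP z0; move: h; rewrite z0; lra.
  move=> z0; have : (z - s) * (z + s) = 0 by rewrite -[RHS](subrr (s^+2)) -{1}h; ring.
  move/eqP; rewrite mulf_eq0 => /orP[]/eqP; lra.
- have [c0|cn0] := eqVneq (z^+2 - s^+2) 0.
    have h' : z^+2 = s^+2 by apply/eqP; rewrite -subr_eq0 c0.
    split; first by apply/negP => /eqP z0; move: h'; rewrite z0; lra.
    move=> z0; have : (z - s) * (z + s) = 0 by rewrite -[RHS](subrr (s^+2)) -{1}h'; ring.
    move/eqP; rewrite mulf_eq0 => /orP[]/eqP; lra.
  have zq : z = s^+2 + 1.
    apply: (mulIf cn0); rewrite h; ring.
  split; [apply/negP => /eqP; lra | move=> _; nra].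
- have [c0|cn0] := eqVneq (z^+2 - s^+2) 0.
    have h' : z^+2 = s^+2 by apply/eqP; rewrite -subr_eq0 c0.
    split; first by apply/negP => /eqP z0; move: h'; rewrite z0; lra.
    move=> z0; have : (z - s) * (z + s) = 0 by rewrite -[RHS](subrr (s^+2)) -{1}h'; ring.
    move/eqP; rewrite mulf_eq0 => /orP[]/eqP; lra.
  have zq : z = - (s^+2 + 1).
    apply: (mulIf cn0); rewrite h; ring.
  split; [apply/negP => /eqP; lra | lra].
- split.
    apply/negP => /eqP z0; move: h; rewrite z0 /fc.
    have -> : 0 ^+ 3 - (s ^+ 2 - 1) * 0 ^+ 2 - 3 * s ^+ 2 * 0 + s ^+ 2 * (s ^+ 2 - 1)
       = s^+2 * (s^+2 - 1) by ring.
    move/eqP; rewrite mulf_eq0 => /orP[]/eqP; lra.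
  move=> z0; rewrite leNgt; apply/negP => zt.
  have := fc_decr hq hs (ltW z0) zt (ltW hts); rewrite h ft; lra.
- split.
    apply/negP => /eqP z0; move: h; rewrite z0 /Qc.
    have -> : 0 ^+ 3 + (s ^+ 2 - 1) * 0 ^+ 2 - 3 * s ^+ 2 * 0 - s ^+ 2 * (s ^+ 2 - 1)
       = - (s^+2 * (s^+2 - 1)) by ring.
    move/eqP; rewrite oppr_eq0 mulf_eq0 => /orP[]/eqP; lra.
  move=> z0; rewrite leNgt; apply/negP => zt.
  have := Qc_neg hq hs z0 (ltW (lt_trans zt hts)); rewrite h; lra.
Qed.

Lemma val_fcE (q : nat) (x : algR) : algRval (fc q%:R x) = fc q%:R (algRval x).
Proof. by rewrite /fc !(rmorphB, rmorphD, rmorphM, rmorphXn, rmorph_nat, rmorph1). Qed.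
Lemma val_QcE (q : nat) (x : algR) : algRval (Qc q%:R x) = Qc q%:R (algRval x).
Proof. by rewrite /Qc !(rmorphB, rmorphD, rmorphM, rmorphXn, rmorph_nat, rmorph1). Qed.

Lemma half_dbl n : ((n + n).+1)./2 = n /\ ((n + n).+2)./2 = n.+1.
Proof. by split; rewrite addnn; [rewrite -add1n (half_bit_double n true) | rewrite -doubleS half_double]. Qed.

Lemma algR_eq (x y : algR) : algRval x = algRval y -> x = y.
Proof. exact: val_inj. Qed.

Lemma HL_eq (P L : finType) (inc : P -> L -> bool) q (pp : projective_plane inc q)
  v0 v1 (he : incidence_graph inc v0 v1) (s t : algR) :
  s^+2 = q%:R -> 0 < s -> 0 < t -> t < s -> fc q%:R t = 0 ->
  HL_index (double_switch (incidence_graph inc) v0 v1) = algRval t.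
Proof.
move=> sq s0 t0 ts ft.
have q2 : (2 <= q)%N by case: pp.
have hq : 2 <= s^+2 by rewrite sq ler_nat.
set G := double_switch (incidence_graph inc) v0 v1.
have esym := @ig_sym _ _ inc.
have ftC : fc q%:R (algRval t) = 0 by rewrite -val_fcE ft rmorph0.
have rt := t_root pp he (ltnW q2) ftC.
have [cpE] := svalP (closed_field_poly_normal (char_poly (adjmx G))).
set rs := sval _ in cpE.
rewrite (monicP (char_poly_monic _)) scale1r in cpE.
have eigE : eigvals (adjmx G) = sort (fun x y => y <= x) rs by [].
have memE z : (z \in rs) = root (char_poly (adjmx G)) z by rewrite cpE root_prod_XsubC.
pose N := #|{: (P + L)%type}|.
have cardV : #|{: (bool * (P + L))%type}| = (N + N)%N by rewrite card_prod card_bool mul2n addnn.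
have sz : size rs = (N + N)%N.
  have := size_char_poly (adjmx G); rewrite cpE size_prod_XsubC cardV; by case.
have hperm : perm_eq rs (map -%R rs).
  apply: (roots_sym cpE); first by rewrite sz oddD addbb.
  move=> x; rewrite (@char_sym _ G (fun x => if x.2 is inl _ then 1 else -1)).
  - have sgn : (-1) ^+ #|{: (bool * (P + L))%type}| = 1 :> algC.
      by rewrite cardV -signr_odd oddD addbb expr0.
    by rewrite sgn mul1r.
  - by move=> [c [u|u]] /=; rewrite ?mulr1 ?mulrNN ?mulr1.
  - move=> [c u] [d w]; rewrite /G /double_switch.
    have hs : swr v0 v1 u w -> incidence_graph inc u w.
      by rewrite /swr => /orP[/andP[/eqP -> /eqP ->]|/andP[/eqP -> /eqP ->]] //; rewrite esym.
    have hg : (if c == d then incidence_graph inc u w &&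
           ~~ ((u == v0) && (w == v1) || (u == v1) && (w == v0))
         else (u == v0) && (w == v1) || (u == v1) && (w == v0)) -> incidence_graph inc u w.
      by case: (c == d) => [/andP[]//|]; exact: hs.
    by move/hg; clear hg hs; case: u => [x1|y1]; case: w => [x2|y2] //= _; rewrite ?mulr1 ?mul1r.
have rsreal : all (fun z => z \is Creal) rs.
  by apply/allP => z; rewrite memE => /(spec_classC pp he) [].
pose rsR := pmap insub rs : seq algR.
have rsRE : map algRval rsR = rs.
  rewrite (pmap_filter (@insubK _ _ algR)); apply/all_filterP.
  by apply: sub_all rsreal => z /=; rewrite isSome_insub.
have memR x : (x \in rsR) = (algRval x \in rs) by rewrite -rsRE (mem_map val_inj).
have permR : perm_eq rsR (map -%R rsR).
  apply: (perm_map_inj val_inj).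
  change (perm_eq (map algRval rsR) (map algRval (map -%R rsR))).
  have -> : map algRval (map -%R rsR) = map -%R (map algRval rsR).
    by rewrite -!map_comp; apply: eq_map => x /=.
  by rewrite rsRE.
have negR x : (- x \in rsR) = (x \in rsR).
  by rewrite (perm_mem permR) (mem_map (@oppr_inj _)).
have cls x : x \in rsR -> x != 0 /\ (0 < x -> t <= x).
  rewrite memR memE => /(spec_classC pp he) [_ H].
  apply: (pos_ge_t hq s0 sq t0 ts ft).
  case: H => [h|[h|[h|[h|h]]]].
  - by left; apply: algR_eq; rewrite rmorphXn rmorph_nat.
  - right; left; apply: algR_eq; rewrite !(rmorphB, rmorphD, rmorphM, rmorphXn, rmorph_nat, rmorph1).
    by rewrite h.
  - right; right; left; apply: algR_eq.
    rewrite !(rmorphN, rmorphB, rmorphD, rmorphM, rmorphXn, rmorph_nat, rmorph1).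
    by rewrite h.
  - by right; right; right; left; apply: algR_eq; rewrite val_fcE h rmorph0.
  - by right; right; right; right; apply: algR_eq; rewrite val_QcE h rmorph0.
have tin : t \in rsR by rewrite memR memE.
have cnt : count (fun x => 0 < x) rsR = N.
  have c1 : count (fun x => 0 < x) rsR = count (fun x => x < 0) rsR.
    rewrite (permP permR) count_map; apply: eq_count => x /=; by rewrite oppr_gt0.
  have c2 : count (predC (fun x => 0 < x)) rsR = count (fun x => x < 0) rsR.
    apply: eq_in_count => x /cls [xn0 _] /=; rewrite -leNgt le_eqVlt (negPf xn0) //.
  have szR : size rsR = (N + N)%N by rewrite -(size_map algRval) rsRE sz.
  by have := count_predC (fun x => 0 < x) rsR; rewrite c2 -c1 szR !addnn => /double_inj.
pose l := sort (relpre algRval (fun x y : algC => y <= x)) rsR.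
have eigE' : eigvals (adjmx G) = map algRval l by rewrite eigE -rsRE sort_map.
have lperm : perm_eq l rsR by rewrite perm_sort.
have lsort : sorted (fun x y : algR => y <= x) l.
  by apply: sort_sorted => x y; exact: le_total.
have lsz : size l = (N + N)%N.
  by rewrite (perm_size lperm) -(size_map algRval) rsRE sz.
have lmem := perm_mem lperm.
have tl : t \in l by rewrite lmem.
have mtl : - t \in l by rewrite lmem negR.
have nz : forall x, x \in l -> x != 0 by move=> x; rewrite lmem => /cls [].
have pb : forall x, x \in l -> 0 < x -> t <= x by move=> x; rewrite lmem => /cls [].
have nb : forall x, x \in l -> x < 0 -> x <= - t.
  move=> x; rewrite lmem -negR => /cls [_ h] xn.
  by rewrite -lerN2 opprK h // oppr_gt0.
have lcnt : count (fun x => 0 < x) l = N by rewrite (permP lperm).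
have [m1 m2] := mid_sorted lsort lsz t0 tl mtl nz pb nb lcnt.
rewrite /HL_index /eigval eigE'.
have [h1 h2] := half_dbl N.
rewrite cardV h1 h2 /=.
have N0 : (0 < N)%N by apply/card_gt0P; exists v0.
have nl : (N < size l)%N by rewrite lsz -{1}(addn0 N) ltn_add2l.
have nl' : (N.-1 < size l)%N by apply: leq_ltn_trans (leq_pred N) nl.
rewrite (nth_map 0) // (nth_map 0) // m1 m2 rmorphN normrN.
have tC0 : 0 <= algRval t.
  have : algRval 0 < algRval t by exact: t0.
  by rewrite rmorph0 => /ltW.
by rewrite ger0_norm // maxxx.
Qed.

Theorem mainTheorem9 :
  forall eps : algC, 0 < eps ->
  exists k0 : nat,
  forall k : nat, (k0 <= k)%N -> prime_power k.-1 ->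
  forall (P L : finType) (inc : P -> L -> bool),
  projective_plane inc k.-1 ->
  forall v0 v1 : (P + L)%type, incidence_graph inc v0 v1 ->
  let s := sqrtC (k.-1)%:R in
  s - 1 - 1 / (2 * s) < HL_index (double_switch (incidence_graph inc) v0 v1)
  /\ HL_index (double_switch (incidence_graph inc) v0 v1)
     < s - 1 - 1 / ((2 + eps) * s).
Proof.
move=> eps eps0.
have epsR : eps \is Creal := gtr0_real eps0.
pose e : algR := in_algR epsR.
have e0 : 0 < e.
  have : algRval 0 < algRval e by rewrite rmorph0.
  by [].
pose B : algR := 8 * (2 + e) / e.
have B0 : 0 <= B by apply: divr_ge0; [apply: mulr_ge0; lra | lra].
pose n0 := maxn (Num.Def.archi_bound B) 2.
have Bn : B < (Num.Def.archi_bound B)%:R := archi_boundP B0.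
exists (n0 * n0).+1.
move=> k hk _ P L inc pp v0 v1 he.
have q2 : (2 <= k.-1)%N by case: pp.
have k0 : (0 < k)%N by apply: leq_trans hk.
have qn : (n0 * n0 <= k.-1)%N by rewrite -ltnS prednK.
pose sR : algR := Num.sqrt (k.-1)%:R.
have sq : sR ^+ 2 = (k.-1)%:R by rewrite sqr_sqrtr // ler0n.
have s0 : 0 < sR by rewrite sqrtr_gt0 ltr0n; apply: leq_trans q2.
have sn0 : n0%:R <= sR.
  have : Num.sqrt ((n0%:R : algR) ^+ 2) <= sR.
    by apply: ler_wsqrtr; rewrite -natrX ler_nat expnS expn1.
  by rewrite sqrtr_sqr ger0_norm ?ler0n.
have s2 : 2 <= sR.
  apply: le_trans sn0; rewrite (ler_nat _ 2); exact: leq_maxr.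
have hq : 2 <= sR ^+ 2 by nra.
have [t [t0 ts ft0]] := t_exists hq s0.
have ft : fc (k.-1)%:R t = 0 by rewrite -sq.
pose c : algR := 1 / (2 + e).
have e2 : 2 + e != 0 by rewrite gt_eqF //; lra.
have c0 : 0 < c by apply: divr_gt0; lra.
have hd : 8 <= (1 - 2 * c) * sR.
  have hc : 1 - 2 * c = e / (2 + e) by rewrite /c; field.
  have hcB : (1 - 2 * c) * B = 8 by rewrite hc /B; field; rewrite (gt_eqF e0) e2.
  have BsR : B <= sR.
    apply: le_trans (ltW Bn) _; apply: le_trans sn0; rewrite ler_nat; exact: leq_maxl.
  rewrite -hcB; apply: ler_wpM2l => //; rewrite hc; apply: divr_ge0; lra.
have [lo hi] := t_bounds s2 t0 ts ft0 c0 hd.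
have HL := HL_eq pp he sq s0 t0 ts ft.
have sC : sqrtC (k.-1)%:R = algRval sR.
  have sRC0 : 0 <= algRval sR.
    have : algRval 0 < algRval sR by exact: s0.
    by rewrite rmorph0 => /ltW.
  apply/eqP; rewrite -(@eqrXn2 _ 2) // ?sqrtC_ge0 ?ler0n //.
  by rewrite sqrtCK -rmorphXn sq rmorph_nat.
move=> s; rewrite /s sC HL.
have lt_v (x y : algR) : x < y -> algRval x < algRval y by [].
split.
- move: (lt_v _ _ lo); rewrite !(rmorphB, rmorph1, rmorphM, fmorphV, rmorph_nat, rmorphD).
  by rewrite mul1r.
- move: (lt_v _ _ hi); rewrite !(rmorphB, rmorph1, rmorphM, fmorphV, rmorph_nat, rmorphD).
  by rewrite !mul1r invfM.
Qed.
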